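(* Let $\lambda_1,\dots,\lambda_5$ be arbitrary integers and for variables $x_1,x_2,x_3$ let $A(x_1,x_2,x_3)$ be the $3\times 3$ matrix $[x_{ij}]$ with $x_{11}=x_1,\ x_{12}=x_2,\ x_{13}=x_3$, $x_{21}=-\lambda_3(\lambda_1-\lambda_2-\lambda_3+\lambda_5)x_2-\lambda_3(\lambda_2-\lambda_4)x_3$, $x_{22}=x_1+\lambda_1x_2+\lambda_2x_3$, $x_{23}=\lambda_3x_2+\lambda_3x_3$, $x_{31}=-\lambda_3(\lambda_2-\lambda_4)x_2+(-\lambda_1\lambda_4+\lambda_2^2-\lambda_2\lambda_5+\lambda_3\lambda_4)x_3$, $x_{32}=\lambda_2x_2+\lambda_4x_3$, $x_{33}=x_1+\lambda_3x_2+\lambda_5x_3$. Then for independent variables $x_i,y_i$, $$A(x_1,x_2,x_3)\,A(y_1,y_2,y_3)=A(z_1,z_2,z_3),$$ where $z_1=x_1y_1-\lambda_3(\lambda_1-\lambda_2-\lambda_3+\lambda_5)x_2y_2-\lambda_3(\lambda_2-\lambda_4)x_2y_3-\lambda_3(\lambda_2-\lambda_4)x_3y_2+(-\lambda_1\lambda_4+\lambda_2^2-\lambda_2\lambda_5+\lambda_3\lambda_4)x_3y_3$, $z_2=x_1y_2+x_2y_1+\lambda_1x_2y_2+\lambda_2x_2y_3+\lambda_2x_3y_2+\lambda_4x_3y_3$, $z_3=x_1y_3+\lambda_3x_2y_2+\lambda_3x_2y_3+x_3y_1+\lambda_3x_3y_2+\lambda_5x_3y_3$. Consequently the ternary cubic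 form $f(x_1,x_2,x_3)=\det A(x_1,x_2,x_3)$ satisfies $f(x_1,x_2,x_3)f(y_1,y_2,y_3)=f(z_1,z_2,z_3)$. *)

(* Defs.v *)
From mathcomp Require Import all_boot all_algebra.
Set Implicit Arguments. Unset Strict Implicit. Unset Printing Implicit Defensive.
Import GRing.Theory.
Local Open Scope ring_scope.

Definition Amx (R : comNzRingType) (l1 l2 l3 l4 l5 : int) (x1 x2 x3 : R) : 'M[R]_3 :=
  let L1 := l1%:~R : R in let L2 := l2%:~R : R in let L3 := l3%:~R : R in
  let L4 := l4%:~R : R in let L5 := l5%:~R : R in
  \matrix_(i < 3, j < 3)
    match nat_of_ord i, nat_of_ord j with
    | 0, 0 => x1
    | 0, 1 => x2
    | 0, _ => x3
    | 1, 0 => - L3 * (L1 - L2 - L3 + L5) * x2 - L3 * (L2 - L4) * x3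
    | 1, 1 => x1 + L1 * x2 + L2 * x3
    | 1, _ => L3 * x2 + L3 * x3
    | _, 0 => - L3 * (L2 - L4) * x2
              + (- L1 * L4 + L2 ^+ 2 - L2 * L5 + L3 * L4) * x3
    | _, 1 => L2 * x2 + L4 * x3
    | _, _ => x1 + L3 * x2 + L5 * x3
    end.

Definition zz1 (R : comNzRingType) (l1 l2 l3 l4 l5 : int) (x1 x2 x3 y1 y2 y3 : R) : R :=
  let L1 := l1%:~R : R in let L2 := l2%:~R : R in let L3 := l3%:~R : R in
  let L4 := l4%:~R : R in let L5 := l5%:~R : R in
  x1 * y1 - L3 * (L1 - L2 - L3 + L5) * x2 * y2 - L3 * (L2 - L4) * x2 * y3
  - L3 * (L2 - L4) * x3 * y2 + (- L1 * L4 + L2 ^+ 2 - L2 * L5 + L3 * L4) * x3 * y3.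

Definition zz2 (R : comNzRingType) (l1 l2 l3 l4 l5 : int) (x1 x2 x3 y1 y2 y3 : R) : R :=
  let L1 := l1%:~R : R in let L2 := l2%:~R : R in
  let L4 := l4%:~R : R in
  x1 * y2 + x2 * y1 + L1 * x2 * y2 + L2 * x2 * y3 + L2 * x3 * y2 + L4 * x3 * y3.

Definition zz3 (R : comNzRingType) (l1 l2 l3 l4 l5 : int) (x1 x2 x3 y1 y2 y3 : R) : R :=
  let L3 := l3%:~R : R in let L5 := l5%:~R : R in
  x1 * y3 + L3 * x2 * y2 + L3 * x2 * y3 + x3 * y1 + L3 * x3 * y2 + L5 * x3 * y3.

(* Main.v *)
Require Import Defs.
From mathcomp Require Import all_boot all_algebra.
From mathcomp Require Import ring.
Local Open Scope ring_scope.
Import GRing.Theory.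

Theorem mainTheorem2 (l1 l2 l3 l4 l5 : int) (R : comNzRingType)
    (x1 x2 x3 y1 y2 y3 : R) :
  let z1 := zz1 l1 l2 l3 l4 l5 x1 x2 x3 y1 y2 y3 in
  let z2 := zz2 l1 l2 l3 l4 l5 x1 x2 x3 y1 y2 y3 in
  let z3 := zz3 l1 l2 l3 l4 l5 x1 x2 x3 y1 y2 y3 in
  let A := Amx l1 l2 l3 l4 l5 in
  A x1 x2 x3 *m A y1 y2 y3 = A z1 z2 z3 /\
  \det (A x1 x2 x3) * \det (A y1 y2 y3) = \det (A z1 z2 z3).
Proof.
move=> z1 z2 z3 A.
have H : A x1 x2 x3 *m A y1 y2 y3 = A z1 z2 z3.
  apply/matrixP => i j; rewrite !mxE !big_ord_recr big_ord0 /= !mxE /=.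
  rewrite /z1 /z2 /z3 /zz1 /zz2 /zz3.
  case: i => [[|[|[|i]]] Hi] //; case: j => [[|[|[|j]]] Hj] //= ; ring.
split => //; by rewrite -det_mulmx H.
Qed.
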